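(* Let $M$ be a sparse paving matroid. Then $M$ is cyclically orderable if and only if, for every nonempty subset $A$ of $E(M)$, $r(M)\,|A|\leq r(A)\,|E(M)|$.
   Context: A matroid $M$ of rank $r$ is sparse paving if every nonspanning circuit is a hyperplane; equivalently, every $r$-subset of $E(M)$ is a basis or a circuit-hyperplane. A matroid $M$ is cyclically orderable if there is a cyclic ordering $(a_1,a_2,\dots,a_n)$ of $E(M)$ in which every set of $r(M)$ cyclically-consecutive elements is a basis of $M$. Here $r(A)$ denotes the rank of $A$ in $M$. *)

(* Defs.v *)
(* Matroids on a finite ground set E(M) = [set: T],
   given by their independent sets. *)
From mathcomp Require Import all_boot.
Set Implicit Arguments. Unset Strict Implicit. Unset Printing Implicit Defensive.

Section Matroid.
Variable T : finType.
Variable indep : {set T} -> bool.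

Definition is_matroid : Prop :=
  [/\ indep set0,
      (forall A B : {set T}, A \subset B -> indep B -> indep A) &
      (forall A B : {set T}, indep A -> indep B -> #|A| < #|B| ->
         exists2 x, x \in B :\: A & indep (x |: A))].

Definition rank (A : {set T}) : nat :=
  \max_(B : {set T} | (B \subset A) && indep B) #|B|.

Definition mrank : nat := rank [set: T].

Definition is_basis (B : {set T}) : bool := indep B && (#|B| == mrank).

Definition is_circuit (C : {set T}) : bool :=
  ~~ indep C && [forall x in C, indep (C :\ x)].

Definition is_flat (X : {set T}) : bool :=
  [forall e in ~: X, rank X < rank (e |: X)].

Definition is_hyperplane (X : {set T}) : bool :=
  is_flat X && (rank X == mrank.-1).

Definition sparse_paving : Prop :=
  forall C : {set T}, is_circuit C -> rank C < mrank -> is_hyperplane C.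

Definition cyclically_orderable : Prop :=
  exists s : seq T, [/\ uniq s, (forall x : T, x \in s) &
    forall i, i < size s -> is_basis [set x in take mrank (rot i s)]].

End Matroid.

(* Main.v *)
Require Import Defs.
From mathcomp Require Import all_boot.
From mathcomp Require Import zify.
From Stdlib Require Import Psatz.
Set Implicit Arguments. Unset Strict Implicit. Unset Printing Implicit Defensive.

Section MatroidFacts.
Variable T : finType.
Variable indep : {set T} -> bool.
Hypothesis M : is_matroid indep.
Hypothesis SP : sparse_paving indep.

Local Notation rk := (rank indep).
Local Notation r := (mrank indep).
Implicit Types A B X H S I : {set T}.

Lemma indep0 : indep set0.
Proof. by case: M. Qed.

Lemma indep_sub A B : A \subset B -> indep B -> indep A.
Proof. by case: M => _ H _; apply: H. Qed.

Lemma augment A B : indep A -> indep B -> #|A| < #|B| ->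
  exists2 x, x \in B :\: A & indep (x |: A).
Proof. by case: M => _ _ H; apply: H. Qed.

Lemma rank_lb A B : B \subset A -> indep B -> #|B| <= rk A.
Proof.
move=> sBA iB; rewrite /rank.
by apply: (leq_bigmax_cond (P := fun B => (B \subset A) && indep B)); rewrite sBA iB.
Qed.

Lemma rank_ub A k : (forall B, B \subset A -> indep B -> #|B| <= k) -> rk A <= k.
Proof.
move=> H; rewrite /rank; apply/bigmax_leqP => B /andP[sBA iB]; exact: H.
Qed.

Lemma rank_witness A : exists B, [/\ B \subset A, indep B & #|B| = rk A].
Proof.
have : 0 < #|[pred B : {set T} | (B \subset A) && indep B]|.
  apply/card_gt0P; exists set0; by rewrite inE sub0set indep0.
move=> /(eq_bigmax_cond (fun B : {set T} => #|B|)) [B].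
rewrite inE => /andP[sBA iB] E; exists B; split=> //.
Qed.

Lemma rank_card A : rk A <= #|A|.
Proof. apply: rank_ub => B sBA _; exact: subset_leq_card. Qed.

Lemma r_le_n : r <= #|T|.
Proof. rewrite /mrank; apply: leq_trans (rank_card _) _; exact: max_card. Qed.

Lemma rank_dep A : ~~ indep A -> rk A < #|A|.
Proof.
move=> dA; have [B [sBA iB <-]] := rank_witness A.
rewrite ltn_neqAle subset_leq_card // andbT.
apply/negP => /eqP E.
have EB : B = A by apply/eqP; rewrite eqEcard sBA E leqnn.
by rewrite -EB iB in dA.
Qed.

Lemma small_indep X : #|X| < r -> indep X.
Proof.
elim: {X}#|X| {-2}X (leqnn #|X|) => [|k IH] X.
  rewrite leqn0 cards_eq0 => /eqP -> _; exact: indep0.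
move=> Xk Xr; apply/negPn/negP => dX.
have allI : forall z, z \in X -> indep (X :\ z).
  move=> z zX; apply: IH.
    by move: Xk; rewrite (cardsD1 z X) zX.
  by apply: leq_ltn_trans Xr; apply: subset_leq_card; apply: subD1set.
have circ : is_circuit indep X.
  by rewrite /is_circuit dX /=; apply/forall_inP.
have X0 : X != set0 by apply: contraNneq dX => ->; exact: indep0.
have rX := rank_dep dX.
have [] := andP (SP circ (leq_trans rX (ltnW Xr))).
move=> _ /eqP E.
have : 0 < #|X| by rewrite card_gt0.
lia.
Qed.

Lemma dep_rset_hyper H : #|H| = r -> ~~ indep H -> is_hyperplane indep H.
Proof.
move=> Hr dH; apply: SP.
  rewrite /is_circuit dH /=; apply/forall_inP => z zH; apply: small_indep.
  by rewrite (cardsD1 z H) zH in Hr; lia.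
by rewrite -Hr; exact: rank_dep.
Qed.

Lemma uc S x y : x \notin S -> y \notin S -> x != y ->
  #|x |: S| = r -> ~~ indep (x |: S) -> ~~ indep (y |: S) -> False.
Proof.
move=> xS yS xy Hr dx dy.
have Sr : #|S| = r.-1 by rewrite cardsU1 xS in Hr; lia.
have r1 : 0 < r by rewrite -Hr cardsU1 xS.
have iS : indep S by apply: small_indep; lia.
have /andP[/forall_inP fl /eqP rH] := dep_rset_hyper Hr dx.
have yc : y \in ~: (x |: S) by rewrite !inE negb_or eq_sym xy.
have := fl y yc; rewrite rH => lt.
have [I [sI iI cI]] := rank_witness (y |: (x |: S)).
have lt2 : #|S| < #|I| by lia.
have [z] := augment iS iI lt2.
rewrite inE => /andP[zS zI] iz.
have := subsetP sI z zI; rewrite !inE (negbTE zS) orbF => /orP[] /eqP ez.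
  by rewrite -ez iz in dy.
by rewrite -ez iz in dx.
Qed.

End MatroidFacts.
Ltac clean_ctx := repeat match goal with
  | H : ?P |- _ => lazymatch P with
       | is_true (leq _ _) => fail
       | is_true (negb (leq _ _)) => fail
       | not (is_true (leq _ _)) => fail
       | @eq ?X _ _ => tryif unify X nat then fail else clear H
       | not (@eq ?X _ _) => tryif unify X nat then fail else clear H
       | _ => clear H
       end
  end.
Ltac lia' := clean_ctx; lia.
Section Comb.
Variable T : finType.
Variable r : nat.
Variable bad : {set T} -> bool.
Hypothesis UC : forall (S : {set T}) x y, x \notin S -> y \notin S -> x != y ->
  bad (x |: S) -> bad (y |: S) -> False.
Hypothesis r2 : 1 < r.
Definition nT := #|T|.
Local Notation n := nT.
Hypothesis nr : r + 2 <= n.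
Implicit Types p s : seq T.

Definition Rem p : {set T} := ~: [set x in p].

Definition Inv p := [/\ uniq p,
  (forall a, a + r <= size p -> ~~ bad [set x in take r (drop a p)]) &
  (forall a, a <= size p -> n <= a + r -> a < n ->
     ~~ bad ([set x in drop a p] :|: Rem p :|: [set x in take (a + r - n) p]))].

Definition C1 p y := ~~ ((r <= (size p).+1) &&
  bad [set x in take r (drop ((size p).+1 - r) (rcons p y))]).
Definition C2 p y := ~~ [&& (n <= (size p).+1 + r), ((size p).+1 < n) &
  bad (Rem p :\ y :|: [set x in take ((size p).+1 + r - n) p])].

Lemma in_Rem p y : (y \in Rem p) = (y \notin p).
Proof. by rewrite !inE. Qed.

Lemma card_Rem p : uniq p -> #|Rem p| = n - size p.
Proof.
by move=> up; rewrite cardsCs setCK cardsE (card_uniqP up).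
Qed.

Lemma size_le p : uniq p -> size p <= n.
Proof. by move=> up; rewrite -(card_uniqP up); exact: max_card. Qed.

Lemma Rem_rcons p y : Rem (rcons p y) = Rem p :\ y.
Proof. by apply/setP => x; rewrite !inE mem_rcons in_cons negb_or. Qed.

Lemma set_rcons p y : [set x in rcons p y] = y |: [set x in p].
Proof. by apply/setP => x; rewrite !inE mem_rcons in_cons. Qed.

Lemma step_ok p y : Inv p -> y \in Rem p -> C1 p y -> C2 p y -> Inv (rcons p y).
Proof.
case=> up Hint Hcov yR c1 c2.
have ynp : y \notin p by rewrite -in_Rem.
split.
- by rewrite rcons_uniq ynp.
- move=> a; rewrite size_rcons => ha.
  case: (ltnP (a + r) (size p).+1) => [lt|ge].
  + have ap : a <= size p by lia'.
    rewrite (drop_rcons ap) -cats1 takel_cat; first by apply: Hint; lia'.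
    by rewrite size_drop; lia'.
  + have -> : a = (size p).+1 - r by lia'.
    by move: c1; rewrite /C1 (_ : r <= (size p).+1) //; lia'.
- move=> a; rewrite size_rcons => ha hn han.
  have tk : take (a + r - n) (rcons p y) = take (a + r - n) p.
    by rewrite -cats1 takel_cat //; lia'.
  rewrite tk Rem_rcons.
  case: (ltnP a (size p).+1) => [ale|age].
  + have ap : a <= size p by lia'.
    rewrite (drop_rcons ap) set_rcons.
    set Q := [set x in take _ p].
    have -> : y |: [set x in drop a p] :|: Rem p :\ y :|: Q =
              [set x in drop a p] :|: Rem p :|: Q.
      apply/setP => x; rewrite !inE.
      by case: (x =P y) => [->|] //=; rewrite ynp !orbT.
    exact: Hcov.
  + have ea : a = (size p).+1 by lia'.
    rewrite ea drop_oversize ?size_rcons //.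
    move: c2; rewrite /C2 -ea (_ : n <= a + r) // (_ : a < n) //= => c2.
    have -> : [set x in [::]] = set0 :> {set T} by apply/setP => x; rewrite !inE.
    by rewrite set0U.
Qed.


Lemma swap_set (R Q : {set T}) y y' : y \in R -> y' \in R -> y != y' ->
  [disjoint R & Q] ->
  [/\ R :\ y :|: Q = y' |: (R :\ y :\ y' :|: Q),
      R :\ y' :|: Q = y |: (R :\ y :\ y' :|: Q),
      y \notin R :\ y :\ y' :|: Q & y' \notin R :\ y :\ y' :|: Q].
Proof.
move=> yR y'R yy dRQ.
have yQ : y \notin Q by rewrite (disjointFr dRQ yR).
have y'Q : y' \notin Q by rewrite (disjointFr dRQ y'R).
split.
- apply/setP => x; rewrite !inE.
  case: (x =P y') => [->|_]; first by rewrite eq_sym yy y'R.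
  by [].
- apply/setP => x; rewrite !inE.
  case: (x =P y) => [->|_]; first by rewrite yy yR.
  by case: (x =P y').
- by rewrite !inE eqxx /= andbF (negbTE yQ).
- by rewrite !inE eqxx /= y'Q.
Qed.


Lemma disj_Rem p (Q : {set T}) : Q \subset [set x in p] -> [disjoint Rem p & Q].
Proof.
move=> sQ; rewrite -setI_eq0; apply/eqP/setP => x; rewrite !inE.
by apply/negP => /andP[xp /(subsetP sQ)]; rewrite inE (negbTE xp).
Qed.

Lemma sub_take k p : [set x in take k p] \subset [set x in p].
Proof. by apply/subsetP => x; rewrite !inE; apply: mem_take. Qed.

Lemma sub_drop k p : [set x in drop k p] \subset [set x in p].
Proof. by apply/subsetP => x; rewrite !inE; apply: mem_drop. Qed.

Lemma C1_uniq p y y' : y \in Rem p -> y' \in Rem p -> ~~ C1 p y -> ~~ C1 p y' -> y = y'.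
Proof.
move=> yR y'R; rewrite /C1 !negbK => /andP[hr b1] /andP[_ b2].
apply/eqP/negPn/negP => yy.
set S := [set x in drop ((size p).+1 - r) p].
have E z : z \in Rem p ->
   [set x in take r (drop ((size p).+1 - r) (rcons p z))] = z |: S.
  move=> zR; rewrite drop_rcons; last by lia'.
  rewrite take_oversize; first by rewrite set_rcons.
  by rewrite size_rcons size_drop; lia'.
rewrite (E y yR) in b1; rewrite (E y' y'R) in b2.
apply: (UC _ _ yy b1 b2).
- apply/negP => /(subsetP (sub_drop _ _)); rewrite inE => yp.
  by rewrite in_Rem yp in yR.
- apply/negP => /(subsetP (sub_drop _ _)); rewrite inE => yp.
  by rewrite in_Rem yp in y'R.
Qed.

Lemma C2_uniq p y y' : y \in Rem p -> y' \in Rem p -> ~~ C2 p y -> ~~ C2 p y' -> y = y'.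
Proof.
move=> yR y'R; rewrite /C2 !negbK => /and3P[_ _ b1] /and3P[_ _ b2].
apply/eqP/negPn/negP => yy.
have [e1 e2 n1 n2] :=
  swap_set yR y'R yy (disj_Rem (sub_take ((size p).+1 + r - n) p)).
rewrite e1 in b1; rewrite e2 in b2.
apply: (UC n2 n1 _ b1 b2); by rewrite eq_sym.
Qed.

Lemma le1 (F : {set T}) : (forall y y', y \in F -> y' \in F -> y = y') -> #|F| <= 1.
Proof. by move=> H; apply/card_le1_eqP => y y' yF y'F; exact: H. Qed.

Lemma choose_core p (F : {set T}) : Inv p -> #|F| < #|Rem p| ->
  (forall y, y \in Rem p -> y \notin F -> C1 p y && C2 p y) ->
  exists y, [/\ y \in Rem p, y \notin F & Inv (rcons p y)].
Proof.
move=> ip cF H.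
have : ~~ (Rem p \subset F).
  by apply/negP => /subset_leq_card; lia'.
case/subsetPn => y yR yF; exists y; split => //.
by have /andP[c1 c2] := H y yR yF; exact: step_ok.
Qed.

Lemma choose3 p : Inv p -> 3 <= #|Rem p| -> exists y, y \in Rem p /\ Inv (rcons p y).
Proof.
move=> ip h3.
set F1 := [set y in Rem p | ~~ C1 p y].
set F2 := [set y in Rem p | ~~ C2 p y].
have c1 : #|F1| <= 1.
  apply: le1 => y y'; rewrite /F1 !inE => /andP[yR b] /andP[y'R b'].
  by apply: (C1_uniq _ _ b b'); rewrite in_Rem.
have c2 : #|F2| <= 1.
  apply: le1 => y y'; rewrite /F2 !inE => /andP[yR b] /andP[y'R b'].
  by apply: (C2_uniq _ _ b b'); rewrite in_Rem.
have cF : #|F1 :|: F2| < #|Rem p|.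
  by have le := (leq_card_setU F1 F2).1; lia'.
have H : forall y, y \in Rem p -> y \notin F1 :|: F2 -> C1 p y && C2 p y.
  move=> y yR; rewrite /F1 /F2 !inE -in_Rem yR /= negb_or !negbK.
  done.
have [y [yR _ ip']] := choose_core ip cF H.
by exists y.
Qed.

Definition Gdone p := [forall z in Rem p, ~~ bad (z |: [set x in take r.-1 p])].

Lemma Gdone_rcons p y : r.-1 <= size p -> Gdone p -> Gdone (rcons p y).
Proof.
move=> hs /forall_inP G; apply/forall_inP => z.
rewrite Rem_rcons inE => /andP[_ zR].
by rewrite -cats1 takel_cat //; exact: G.
Qed.

Lemma choose2 p : Inv p -> #|Rem p| = 2 -> Gdone p ->
  exists y, y \in Rem p /\ Inv (rcons p y).
Proof.
move=> ip h2 /forall_inP G.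
have up : uniq p by case: ip.
have sp : size p = n - 2 by have := card_Rem up; lia'.
set F1 := [set y in Rem p | ~~ C1 p y].
have c1 : #|F1| <= 1.
  apply: le1 => y y'; rewrite /F1 !inE => /andP[yR b] /andP[y'R b'].
  by apply: (C1_uniq _ _ b b'); rewrite in_Rem.
have cF : #|F1| < #|Rem p| by lia'.
have H : forall y, y \in Rem p -> y \notin F1 -> C1 p y && C2 p y.
  move=> y yR; rewrite /F1 !inE -in_Rem yR /= negbK => ->.
  rewrite /C2 (_ : (size p).+1 + r - n = r.-1); last by lia'.
  have : #|Rem p :\ y| == 1 by rewrite (cardsD1 y) yR in h2; apply/eqP; lia'.
  case/cards1P => z Ez.
  have zR : z \in Rem p.
    have : z \in Rem p :\ y by rewrite Ez set11.
    by rewrite inE => /andP[].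
  by rewrite Ez (negbTE (G z zR)) !andbF.
have [y [yR _ ip']] := choose_core ip cF H.
by exists y.
Qed.

Lemma choose1 p : Inv p -> #|Rem p| = 1 -> exists y, y \in Rem p /\ Inv (rcons p y).
Proof.
move=> ip h1.
have [up Hint Hcov] := ip.
have sp : size p = n - 1 by have := card_Rem up; lia'.
have /cards1P [y Ey] : #|Rem p| == 1 by rewrite h1.
have yR : y \in Rem p by rewrite Ey set11.
exists y; split => //; apply: step_ok => //.
- rewrite /C1 negb_and; apply/orP; right.
  have ynp : y \notin p by rewrite -in_Rem.
  rewrite (_ : (size p).+1 - r = n - r); last by lia'.
  rewrite drop_rcons; last by lia'.
  rewrite take_oversize; last by rewrite size_rcons size_drop; lia'.
  have a1 : n - r <= size p by lia'.
  have a2 : n <= n - r + r by lia'.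
  have a3 : n - r < n by lia'.
  have := Hcov (n - r) a1 a2 a3.
  rewrite (_ : n - r + r - n = 0); last by lia'.
  rewrite take0 Ey set_rcons.
  have -> : [set x in [::]] = set0 :> {set T} by apply/setP => x; rewrite !inE.
  by rewrite setU0 setUC.
- by rewrite /C2 (_ : (size p).+1 < n = false) ?andbF //; lia'.
Qed.

Lemma finish k p : n - size p = k -> Inv p -> r.-1 <= size p -> Gdone p ->
  exists s, Inv s /\ size s = n.
Proof.
elim: k p => [|k IH] p hk ip hs G.
  exists p; split => //; have up : uniq p by case: ip.
  by have := size_le up; lia'.
have up : uniq p by case: ip.
have cR : #|Rem p| = k.+1 by rewrite card_Rem.
have [y [yR ip']] : exists y, y \in Rem p /\ Inv (rcons p y).
  case: (ltnP 2 k.+1) => [h3|h2]; first by apply: choose3 => //; lia'.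
  case: (ltnP 1 k.+1) => [h2'|h1].
    by apply: choose2 => //; lia'.
  by apply: choose1 => //; lia'.
apply: (IH (rcons p y)) => //.
- by rewrite size_rcons; lia'.
- by rewrite size_rcons; lia'.
- exact: Gdone_rcons.
Qed.

Lemma start m : m <= r.-1 -> exists p, Inv p /\ size p = m.
Proof.
elim: m => [|m IH] hm.
  exists [::]; split => //; split => //.
  - by move=> a /= h; lia'.
  - by move=> a /= h1 h2 h3; lia'.
have [p [ip sp]] := IH (ltnW hm).
have up : uniq p by case: ip.
have h3 : 3 <= #|Rem p| by rewrite card_Rem //; lia'.
have [y [yR ip']] := choose3 ip h3.
by exists (rcons p y); rewrite size_rcons sp.
Qed.

Lemma setD1C (A : {set T}) a b : A :\ a :\ b = A :\ b :\ a.
Proof. by apply/setP => x; rewrite !inE andbCA. Qed.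

Lemma set_cat p q : [set x in p ++ q] = [set x in p] :|: [set x in q].
Proof. by apply/setP => x; rewrite !inE mem_cat. Qed.

Lemma middle P : Inv P -> size P = r.-1 ->
  exists p, [/\ Inv p, r.-1 <= size p & Gdone p].
Proof.
move=> iP sP.
have uP : uniq P by case: iP.
have tP : take r.-1 P = P by rewrite take_oversize // sP.
case: (boolP (Gdone P)) => [G|]; first by exists P; rewrite sP.
rewrite /Gdone tP => /forall_inPn [g gR /negPn gB].
have gP : g \notin P by rewrite -in_Rem.
have UCP z : z \in Rem P -> z != g -> ~~ bad (z |: [set x in P]).
  move=> zR zg; apply/negP => zB.
  apply: (UC _ _ zg zB gB); rewrite inE -?in_Rem //.
set F2 := [set y in Rem P | ~~ C2 P y].
set F3 := [set y in Rem P | (y != g) && ~~ C2 (rcons P y) g].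
have c2 : #|F2| <= 1.
  apply: le1 => y y'; rewrite /F2 !inE => /andP[yR b] /andP[y'R b'].
  by apply: (C2_uniq _ _ b b'); rewrite in_Rem.
have tk k y : k <= size P -> take k (rcons P y) = take k P.
  by move=> hk; rewrite -cats1 takel_cat.
have c3 : #|F3| <= 1.
  apply: le1 => y y'; rewrite /F3 !inE => /and3P[yP yg b] /and3P[y'P y'g b'].
  apply/eqP/negPn/negP => yy.
  move: b b'; rewrite /C2 !negbK !size_rcons !Rem_rcons => /and3P[_ _ b] /and3P[_ _ b'].
  rewrite tk in b; last by lia'.
  rewrite tk in b'; last by lia'.
  rewrite setD1C in b; rewrite setD1C in b'.
  have yR : y \in Rem P :\ g by rewrite in_setD1 yg in_Rem.
  have y'R : y' \in Rem P :\ g by rewrite in_setD1 y'g in_Rem.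
  have dj : [disjoint Rem P :\ g & [set x in take ((size P).+2 + r - n) P]].
    apply: disjointWl (subD1set _ _) _; exact: disj_Rem (sub_take _ _).
  have [e1 e2 n1 n2] := swap_set yR y'R yy dj.
  rewrite e1 in b; rewrite e2 in b'.
  by apply: (UC n2 n1 _ b b'); rewrite eq_sym.
have F30 : n = r + 2 -> #|F3| = 0.
  move=> hn; apply/eqP; rewrite cards_eq0; apply/eqP/setP => y; rewrite /F3 !inE.
  apply/negP => /and3P[yP yg b].
  move: b; rewrite /C2 negbK size_rcons Rem_rcons => /and3P[_ _ b].
  rewrite (_ : (size P).+2 + r - n = r.-1) in b; last by lia'.
  rewrite tk ?tP in b; last by lia'.
  have yR : y \in Rem P by rewrite in_Rem.
  have : #|Rem P :\ y :\ g| == 1.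
    have := card_Rem uP; rewrite (cardsD1 y (Rem P)) yR.
    rewrite (cardsD1 g (Rem P :\ y)) !inE eq_sym yg gP.
    by move=> h; apply/eqP; lia'.
  case/cards1P => z Ez.
  have : z \in Rem P :\ y :\ g by rewrite Ez set11.
  rewrite !inE => /and3P[zg zy zP].
  have zR : z \in Rem P by rewrite in_Rem.
  by rewrite Ez (negbTE (UCP z zR zg)) in b.
set F := g |: (F2 :|: F3).
have cF : #|F| < #|Rem P|.
  rewrite card_Rem // sP.
  have h1 := (leq_card_setU F2 F3).1.
  have h0 : #|F| <= 1 + #|F2 :|: F3| by rewrite /F cardsU1; case: (g \notin _).
  case: (ltnP (r + 2) n) => hn; first by lia'.
  have hn2 : n = r + 2 by lia'.
  have := F30 hn2; lia'.
have H y : y \in Rem P -> y \notin F -> C1 P y && C2 P y.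
  move=> yR; rewrite /F /F2 !inE negb_or => /andP[yg].
  have yP : y \notin P by rewrite -in_Rem.
  rewrite negb_or yP /= negbK => /andP[-> _]; rewrite andbT.
  rewrite /C1 sP (_ : (r.-1).+1 - r = 0); last by lia'.
  rewrite drop0 take_oversize ?size_rcons ?sP; last by lia'.
  by rewrite set_rcons (negbTE (UCP y yR yg)) andbF.
have [y [yR yF ip1]] := choose_core iP cF H.
move: yF; rewrite /F /F2 /F3 !inE !negb_or => /andP[yg /andP[_]].
have yP : y \notin P by rewrite -in_Rem.
rewrite yP yg /= negbK => c3y.
have gR1 : g \in Rem (rcons P y) by rewrite Rem_rcons in_setD1 eq_sym yg.
have uP1 : uniq (rcons P y) by case: ip1.
have c1g : C1 (rcons P y) g.
  rewrite /C1 size_rcons sP (_ : (r.-1).+2 - r = 1); last by lia'.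
  case EP : P sP uP gP yP gB => [|x0 P'] //=; first by lia'.
  move=> sP' /andP[x0P' uP'] gP yP gB.
  rewrite drop0 take_oversize ?size_rcons ?sP'; last by lia'.
  rewrite !set_rcons; apply/negP => b.
  have e1 : [set x in x0 :: P'] = x0 |: [set x in P'].
    by apply/setP => x; rewrite !inE.
  rewrite e1 in gB.
  have e2 : g |: (x0 |: [set x in P']) = x0 |: (g |: [set x in P']).
    by apply/setP => x; rewrite !inE orbCA.
  have e3 : g |: (y |: [set x in P']) = y |: (g |: [set x in P']).
    by apply/setP => x; rewrite !inE orbCA.
  rewrite e2 in gB; rewrite e3 in b.
  move: gP yP; rewrite !inE !negb_or => /andP[gx0 gP'] /andP[yx0 yP'].
  case/andP: b => _ b.
  apply: (UC _ _ _ gB b).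
  - by rewrite !inE negb_or eq_sym gx0.
  - by rewrite !inE negb_or yg.
  - by rewrite eq_sym.
have c2g : C2 (rcons P y) g := c3y.
have ip2 := step_ok ip1 gR1 c1g c2g.
exists (rcons (rcons P y) g); split; first exact: ip2.
  by rewrite !size_rcons sP; lia'.
apply/forall_inP => z; rewrite !Rem_rcons !in_setD1 => /andP[zg /andP[zy zR]].
rewrite -!cats1 -catA takel_cat ?tP; last by lia'.
exact: UCP.
Qed.


Lemma inv_win s i : Inv s -> size s = n -> i < n -> ~~ bad [set x in take r (rot i s)].
Proof.
case=> us Hint Hcov ss hi.
have R0 : Rem s = set0 by apply/eqP; rewrite -cards_eq0 card_Rem // ss subnn.
rewrite /rot; case: (leqP (i + r) n) => h.
  rewrite takel_cat; first by apply: Hint; rewrite ss.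
  by rewrite size_drop ss; lia'.
rewrite take_cat size_drop ss ifN; last by lia'.
rewrite take_takel; last by lia'.
rewrite (_ : r - (n - i) = i + r - n); last by lia'.
have := Hcov i _ _ hi; rewrite ss R0 setU0 set_cat.
apply; lia'.
Qed.

Theorem comb_main : exists s, [/\ uniq s, size s = n &
  forall i, i < n -> ~~ bad [set x in take r (rot i s)]].
Proof.
have [P [iP sP]] := start (leqnn r.-1).
have [p [ip hp G]] := middle iP sP.
have [s [iS ss]] := finish (erefl (n - size p)) ip hp G.
exists s; split => //; first by case: iS.
by move=> i hi; exact: inv_win.
Qed.

End Comb.

Section Final.
Variable T : finType.
Variable indep : {set T} -> bool.
Hypothesis M : is_matroid indep.
Hypothesis SP : sparse_paving indep.
Local Notation r := (mrank indep).
Implicit Types (s : seq T) (A : {set T}).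

Ltac revert_arith := repeat match goal with
  | H : is_true (leq _ _) |- _ => revert H
  | H : is_true (negb (leq _ _)) |- _ => revert H
  | H : not (is_true (leq _ _)) |- _ => revert H
  | H : @eq ?X _ _ |- _ => unify X nat; revert H
  | H : not (@eq ?X _ _) |- _ => unify X nat; revert H
  end.
Ltac liaF := clean_ctx; revert_arith; try (set NN := #|T|); intros; lia.

Lemma size_cyc s : uniq s -> (forall x, x \in s) -> size s = #|T|.
Proof.
move=> us alls; rewrite -(card_uniqP us); apply: eq_card => x.
by rewrite alls inE.
Qed.

Lemma all_of_size s : uniq s -> size s = #|T| -> forall x, x \in s.
Proof.
move=> us ss x.
have : [set x in s] = setT.
  by apply/eqP; rewrite eqEcard subsetT cardsT cardsE (card_uniqP us) ss leqnn.
by move/setP/(_ x); rewrite !inE.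
Qed.

Lemma win_card s i : uniq s -> size s = #|T| ->
  #|[set x in take r (rot i s)]| = r.
Proof.
move=> us ss.
rewrite cardsE (card_uniqP (take_uniq _ _)); last by rewrite rot_uniq.
by rewrite size_takel // size_rot ss; exact: r_le_n.
Qed.

Lemma rot_idx s y : y \in s ->
  rot (index y s) s = y :: (drop (index y s).+1 s ++ take (index y s) s).
Proof.
by move=> ys; rewrite /rot (drop_nth y) ?index_mem // nth_index.
Qed.

Lemma window_facts s A : uniq s -> (forall x, x \in s) ->
  (forall i, i < size s -> is_basis indep [set x in take r (rot i s)]) ->
  #|A| = r -> ~~ indep A -> 1 < r /\ r + 2 <= #|T|.
Proof.
move=> us alls win hA dA.
have ss := size_cyc us alls.
have rn := r_le_n indep.
have wi i : i < #|T| -> indep [set x in take r (rot i s)].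
  by move=> hi; rewrite ss in win; case/andP: (win i hi).
have r0 : r != 0.
  apply/eqP => r0; have : A = set0 by apply/eqP; rewrite -cards_eq0 hA r0.
  by move=> E; rewrite E (indep0 M) in dA.
have r1 : r != 1.
  apply/eqP => r1; have /cards1P [y Ey] : #|A| == 1 by rewrite hA r1.
  have ys := alls y.
  have := wi (index y s); rewrite -ss index_mem => /(_ ys).
  rewrite rot_idx // r1 /= take0.
  have -> : [set x in [:: y]] = [set y] by apply/setP => x; rewrite !inE.
  by rewrite -Ey (negbTE dA).
have rn1 : r != #|T|.
  apply/eqP => rn1; have EA : A = setT.
    by apply/eqP; rewrite eqEcard subsetT cardsT hA rn1 leqnn.
  have h0 : 0 < #|T| by rewrite -rn1 lt0n.
  have := wi 0 h0; rewrite rot0 take_oversize ?ss ?rn1 //.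
  have -> : [set x in s] = setT by apply/setP => x; rewrite !inE alls.
  by rewrite -EA (negbTE dA).
have rn2 : r.+1 != #|T|.
  apply/eqP => rn2; have {}rn2 : r.+1 = #|T| := rn2.
  have cA : #|~: A| == 1.
    have h1 : #|~: A| <= #|T| := max_card _.
    have h2 : #|A| = #|T| - #|~: A| := cardsCs A.
    apply/eqP; liaF.
  case/cards1P: cA => y Ey.
  have EA : A = ~: [set y] by rewrite -Ey setCK.
  have ys := alls y.
  set j := index y s.
  have jn : j < #|T| by rewrite -ss index_mem.
  set t := drop j.+1 s ++ take j s.
  have rj : rot j s = y :: t by rewrite rot_idx.
  have st : size t = r.
    have := size_rot j s; rewrite rj ss /= => h; liaF.
  have [i [hi ri]] : exists i, i < #|T| /\ rot i s = rcons t y.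
    case: (ltnP j.+1 #|T|) => h.
      by exists j.+1; split => //; rewrite rotS ?ss // rj rot1_cons.
    exists 0; split; first by liaF.
    rewrite rot0 -rot1_cons -rj -rotD ?ss; last by liaF.
    by rewrite (_ : 1 + j = size s) ?rot_size //; liaF.
  have := wi i hi; rewrite ri -cats1 takel_cat ?st // take_oversize ?st //.
  have -> : [set x in t] = A.
    have ut : uniq (y :: t) by rewrite -rj rot_uniq.
    move: ut => /= /andP[yt _].
    apply/setP => x; rewrite EA !inE.
    case: (x =P y) => [->|/eqP xy] /=; first by rewrite (negbTE yt).
    by have := alls x; rewrite -(mem_rot j) rj in_cons (negbTE xy).
  by rewrite (negbTE dA).
have a0 : 0 < r by rewrite lt0n.
have a1 : r <> 1 by apply/eqP.
have a2 : r <> #|T| by apply/eqP.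
have a3 : r.+1 <> #|T| by apply/eqP.
liaF.
Qed.

Ltac niaF := clean_ctx; revert_arith; try (set NN := #|T|); intros; nia.

Lemma win_basis s (bad : {set T} -> bool) :
  bad =1 (fun X => (#|X| == r) && ~~ indep X) ->
  uniq s -> size s = #|T| ->
  (forall i, i < #|T| -> ~~ bad [set x in take r (rot i s)]) ->
  cyclically_orderable indep.
Proof.
move=> eb us ss nb; exists s; split => //; first exact: all_of_size.
move=> i; rewrite ss => hi; rewrite /is_basis (win_card _ us ss) eqxx andbT.
by have := nb i hi; rewrite eb win_card // eqxx /= negbK.
Qed.

Lemma main_equiv : cyclically_orderable indep <->
   forall A : {set T}, A != set0 -> r * #|A| <= rank indep A * #|T|.
Proof.
have rn : r <= #|T| := r_le_n indep.
split.
- case=> s [us alls win] A A0.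
  case: (ltnP #|A| r) => hA.
    have iA := small_indep M SP hA.
    have h := rank_lb (subxx A) iA.
    by rewrite mulnC; apply: leq_mul.
  case: (leqP r (rank indep A)) => hR.
    by apply: leq_mul => //; exact: max_card.
  have r0 : 0 < r by liaF.
  have hAr : #|A| = r.
    apply/eqP; rewrite eqn_leq hA andbT; apply/negP => hlt.
    set S := [set x in take r.-1 (enum A)].
    have sS : S \subset A.
      by apply/subsetP => x; rewrite inE => /mem_take; rewrite mem_enum.
    have cS : #|S| = r.-1.
      rewrite cardsE (card_uniqP (take_uniq _ (enum_uniq _))) size_takel //.
      by rewrite -cardE; liaF.
    have c2 : 1 < #|A :\: S|.
      have h := cardsD A S; have e : A :&: S = S by apply/setIidPr.
      rewrite e cS in h; rewrite h; liaF.
    case/card_gt1P: c2 => x [y [xAS yAS xy]].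
    move: xAS yAS; rewrite !in_setD => /andP[xS xA] /andP[yS yA].
    have cz z : z \notin S -> #|z |: S| = r by move=> zS; rewrite cardsU1 zS cS; liaF.
    have dep z : z \in A -> z \notin S -> ~~ indep (z |: S).
      move=> zA zS; apply/negP => iz.
      have : z |: S \subset A by rewrite subUset sub1set zA sS.
      move/rank_lb/(_ iz); rewrite cz //; liaF.
    exact: (uc M SP xS yS xy (cz x xS) (dep x xA xS) (dep y yA yS)).
  have dA : ~~ indep A.
    by apply/negP => iA; have := rank_lb (subxx A) iA; rewrite hAr; liaF.
  have [r2 nr2] := window_facts us alls win hAr dA.
  have [z zA] : exists z, z \in A by apply/set0Pn.
  have rA : r.-1 <= rank indep A.
    have iz : indep (A :\ z).
      apply: (small_indep M SP); have := cardsD1 z A; rewrite zA hAr => h; liaF.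
    have := rank_lb (subD1set A z) iz.
    have := cardsD1 z A; rewrite zA hAr => h; liaF.
  rewrite hAr; niaF.
- move=> dens.
  pose bad := fun X : {set T} => (#|X| == r) && ~~ indep X.
  case: (boolP [exists X, bad X]) => [/existsP [H /andP[/eqP Hr dH]]|/existsPn nob].
    have H0 : H != set0.
      by apply: contraNneq dH => ->; exact: (indep0 M).
    have := dens H H0; rewrite Hr => hd.
    have rH : rank indep H < r by rewrite -Hr; exact: rank_dep.
    have r1 : 0 < r.
      rewrite lt0n; apply: contraNneq H0 => r0.
      by rewrite -cards_eq0 Hr r0.
    have r2 : 1 < r by niaF.
    have nr : r + 2 <= nT T by rewrite /nT; niaF.
    have UCb : forall (S : {set T}) x y, x \notin S -> y \notin S -> x != y ->
        bad (x |: S) -> bad (y |: S) -> False.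
      move=> S x y xS yS xy /andP[/eqP hx dx] /andP[_ dy].
      exact: (uc M SP xS yS xy hx dx dy).
    have [s [us ss nb]] := comb_main UCb r2 nr.
    by apply: (@win_basis s bad) => //.
  apply: (@win_basis (enum T) bad).
  - by [].
  - exact: enum_uniq.
  - by rewrite -cardT.
  - by move=> i _; exact: nob.
Qed.

End Final.

Theorem theorem2p8 (T : finType) (indep : {set T} -> bool) :
  is_matroid indep -> sparse_paving indep ->
  (cyclically_orderable indep <->
   forall A : {set T}, A != set0 ->
     mrank indep * #|A| <= rank indep A * #|T|).
Proof. by move=> M SP; exact: main_equiv. Qed.
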